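(* Let $A$ be a non-reduced Abelian group. Then $\mathrm{End}\,A$ is centrally essential if and only if $\mathrm{End}\,A$ is commutative.
   Context: All rings are associative with non-zero identity. A ring $R$ is centrally essential if for every non-zero $a\in R$ there exist non-zero elements $x,y$ of the center of $R$ with $ax=y$. An Abelian group is non-reduced if it contains a non-zero divisible subgroup. *)

(* Defs.v *)
(* An Abelian group is a zmodType A; End A is the ring of
   additive maps A -> A, with addition pointwise and multiplication given by
   composition (f * g := f \o g). Elements of End A are compared extensionally. *)
From mathcomp Require Import all_boot all_algebra.
Set Implicit Arguments. Unset Strict Implicit. Unset Printing Implicit Defensive.
Import GRing.Theory.
Local Open Scope ring_scope.

Section EndDefs.
Variable A : zmodType.

Definition is_endo (f : A -> A) : Prop := forall x y : A, f (x - y) = f x - f y.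

Definition endo_nonzero (f : A -> A) : Prop := exists x : A, f x <> 0.

Definition endo_mul (f g : A -> A) : A -> A := fun x => f (g x).

Definition endo_central (c : A -> A) : Prop :=
  is_endo c /\ forall g : A -> A, is_endo g ->
    forall x : A, endo_mul c g x = endo_mul g c x.

Definition End_centrally_essential : Prop :=
  forall a : A -> A, is_endo a -> endo_nonzero a ->
    exists x y : A -> A,
      [/\ endo_central x, endo_nonzero x, endo_central y, endo_nonzero y &
          forall z : A, endo_mul a x z = y z].

Definition End_commutative : Prop :=
  forall f g : A -> A, is_endo f -> is_endo g ->
    forall z : A, endo_mul f g z = endo_mul g f z.

Definition is_subgroup (D : A -> Prop) : Prop :=
  D 0 /\ forall x y : A, D x -> D y -> D (x - y).

Definition is_divisible_subgroup (D : A -> Prop) : Prop :=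
  is_subgroup D /\
  forall (d : A) (n : nat), D d -> (0 < n)%N -> exists e : A, D e /\ e *+ n = d.

Definition non_reduced : Prop :=
  exists D : A -> Prop, is_divisible_subgroup D /\ exists d : A, D d /\ d <> 0.

End EndDefs.

(* Main.v *)
Require Import Defs.
From mathcomp Require Import all_boot all_algebra.
From mathcomp Require Import boolp classical_sets.
Set Implicit Arguments. Unset Strict Implicit. Unset Printing Implicit Defensive.
Import GRing.Theory.
Local Open Scope ring_scope.

Section S.
Variable A : zmodType.
Implicit Types (f g : A -> A) (x y z : A).

Lemma endo0 f : is_endo f -> f 0 = 0.
Proof. by move=> hf; have h := hf 0 0; rewrite subrr in h; rewrite [LHS]h subrr. Qed.
Lemma endoN f : is_endo f -> forall x, f (- x) = - f x.
Proof. by move=> hf x; rewrite -sub0r hf (endo0 hf) sub0r. Qed.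
Lemma endoD f : is_endo f -> forall x y, f (x + y) = f x + f y.
Proof. by move=> hf x y; have := hf x (- y); rewrite opprK => ->; rewrite (endoN hf) opprK. Qed.
Lemma endoMn f : is_endo f -> forall x n, f (x *+ n) = f x *+ n.
Proof.
move=> hf x; elim=> [|n IH]; first by rewrite !mulr0n (endo0 hf).
by rewrite !mulrS (endoD hf) IH.
Qed.
Lemma endoMz f : is_endo f -> forall x m, f (x *~ m) = f x *~ m.
Proof.
move=> hf x [n|n]; first exact: (endoMn hf).
by rewrite !NegzE !mulrNz (endoN hf) -!pmulrn (endoMn hf).
Qed.

Lemma endo_comp f g : is_endo f -> is_endo g -> is_endo (fun x => f (g x)).
Proof. by move=> hf hg x y; rewrite hg hf. Qed.
Lemma endo_sub f g : is_endo f -> is_endo g -> is_endo (fun x => f x - g x).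
Proof. by move=> hf hg x y; rewrite hf hg !opprD addrACA. Qed.
Lemma endo_id : is_endo (fun x : A => x).
Proof. by []. Qed.

Lemma idem_kill (CE : End_centrally_essential A) e g :
  is_endo e -> (forall x, e (e x) = e x) -> is_endo g ->
  forall z, e (g (z - e z)) = 0.
Proof.
move=> he hee hg; apply: contrapT => /existsNP nz.
pose a := fun z => e (g (z - e z)).
have ha : is_endo a.
  apply: endo_comp => //; apply: endo_comp => //; exact: endo_sub.
have [x [y [[hxe hx] hxnz [hye hy] [w hw] hxy]]] := CE a ha nz.
apply: hw.
have aek u : a (e u) = 0 by rewrite /a hee subrr endo0 // endo0.
have e_y u : e (y u) = y u by rewrite -hxy /endo_mul /a hee.
rewrite -e_y -[e (y w)]/(endo_mul e y w) -hy // /endo_mul.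
rewrite -hxy /endo_mul -[x (e w)]/(endo_mul x e w) hx //.
exact: aek.
Qed.

Lemma idem_central (CE : End_centrally_essential A) e :
  is_endo e -> (forall x, e (e x) = e x) -> endo_central e.
Proof.
move=> he hee; split=> // g hg x; rewrite /endo_mul.
have h1 := idem_kill CE he hee hg x.
pose e' := fun z : A => z - e z.
have he' : is_endo e' by apply: endo_sub.
have he'e' : forall z, e' (e' z) = e' z.
  by move=> z; rewrite /e' /= he hee subrr subr0.
have h2 := idem_kill CE he' he'e' hg (e x).
move: h1 h2; rewrite /e' /= hee subrr subr0 (hg x) (he (g x)) => /eqP; rewrite subr_eq0 => /eqP ->.
by move/eqP; rewrite subr_eq0 => /eqP <-.
Qed.

Lemma prime_split (p : nat) (m : int) : prime p ->
  (exists m', m = m' * p%:Z) \/ (exists u v : int, u * m + v * p%:Z = 1).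
Proof.
move=> pp; have [dv|ndv] := boolP (p %| `|m|)%N.
  left; exists (m %/ p%:Z)%Z; rewrite divzK //.
have : coprimez m p%:Z.
  by rewrite /coprimez /gcdz /=; change (coprime `|m| p); rewrite coprime_sym prime_coprime.
by move/coprimezP => [[u v] /= h]; right; exists u, v.
Qed.

Lemma mulrzDr' (x : A) (m n : int) : x *~ (m + n) = x *~ m + x *~ n.
Proof. by rewrite -!scalezrE scalerDl. Qed.

Section SG.
Variable (X : A -> Prop) (hX : is_subgroup X).
Lemma sg0 : X 0. Proof. by case: hX. Qed.
Lemma sgB x y : X x -> X y -> X (x - y). Proof. by case: hX => _; apply. Qed.
Lemma sgN x : X x -> X (- x). Proof. by move=> h; rewrite -sub0r; apply: sgB => //; apply: sg0. Qed.
Lemma sgD x y : X x -> X y -> X (x + y).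
Proof. by move=> hx hy; rewrite -[y]opprK; apply: sgB => //; apply: sgN. Qed.
Lemma sgMn x n : X x -> X (x *+ n).
Proof. move=> hx; elim: n => [|n IH]; first by rewrite mulr0n; apply: sg0. by rewrite mulrS; apply: sgD. Qed.
Lemma sgMz x m : X x -> X (x *~ m).
Proof. move=> hx; case: m => n; first by rewrite -pmulrn; apply: sgMn. by rewrite NegzE mulrNz -pmulrn; apply: sgN; apply: sgMn. Qed.
End SG.

Lemma mulrzDl' (x y : A) (m : int) : (x + y) *~ m = x *~ m + y *~ m.
Proof. by rewrite -!scalezrE scalerDr. Qed.
Lemma subrACA' (a b c d : A) : a - b - (c - d) = a - c - (b - d).
Proof. by rewrite !opprD addrACA. Qed.

Definition inSC (S C : A -> Prop) z := exists s, S s /\ C (z - s).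

Lemma complement (S C0 : A -> Prop) :
  is_subgroup S -> is_subgroup C0 -> (forall x, S x -> C0 x -> x = 0) ->
  (forall C : A -> Prop, is_subgroup C -> (forall x, C0 x -> C x) ->
     (forall x, S x -> C x -> x = 0) ->
     forall (p : nat) a s, prime p -> S s -> C (a *+ p - s) ->
     exists s', S s' /\ C ((a - s') *+ p)) ->
  exists e, [/\ is_endo e, forall x, S (e x), forall x, S x -> e x = x
              & forall x, C0 x -> e x = 0].
Proof.
move=> [S0 SB] [C00 C0B] SC0 H.
pose good (X : set A) := [/\ is_subgroup X, (forall x, C0 x -> X x) &
   forall x, S x -> X x -> x = 0].
pose P (X : set A) := X = set0 \/ good X.
have [C [PC Cmax]] : exists C, P C /\ forall B, (C `<` B)%classic -> ~ P B.
  apply: Zorn_bigcup => F FP Ftot.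
  have [[X0 [FX0 [x0 X0x0]]]|none] := pselect (exists X, F X /\ exists x, X x).
  - have gX0 : good X0 by case: (FP X0 FX0) => // e0; rewrite e0 in X0x0.
    have gof X x : F X -> X x -> good X.
      by move=> FX Xx; case: (FP X FX) => // e0; rewrite e0 in Xx.
    right; split; [split|..].
    + by exists X0 => //; case: gX0 => [[]].
    + move=> x y [X1 FX1 X1x] [X2 FX2 X2y].
      have [s12|s21] := Ftot X1 X2 FX1 FX2.
      * exists X2 => //; case: (gof X2 y FX2 X2y) => [[_ h] _ _].
        by apply: h => //; apply: s12.
      * exists X1 => //; case: (gof X1 x FX1 X1x) => [[_ h] _ _].
        by apply: h => //; apply: s21.
    + by move=> x C0x; exists X0 => //; case: gX0 => _ h _; apply: h.
    + move=> x Sx [X FX Xx]; case: (gof X x FX Xx) => _ _ h; exact: h.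
  - left; apply/seteqP; split=> x // [X FX Xx]; apply: none; exists X; split=> //.
    by exists x.
have gC : good C.
  case: PC => // C_0; exfalso; apply: (Cmax C0); last first.
    by right; split => //; split.
  rewrite C_0; split=> //; move=> h; have := h 0 C00; by [].
case: gC => [[C0' CB] C0C SCd].
have Cmax' (B : set A) : good B -> (forall x, C x -> B x) -> forall x, B x -> C x.
  move=> gB CB' x Bx; apply: contrapT => nCx; apply: (Cmax B); last by right.
  split=> // h; exact/nCx/h.
have adjoin b : ~ C b -> exists c m, [/\ C c, S (c + b *~ m) & c + b *~ m <> 0].
  move=> nCb; apply: contrapT => hn.
  pose B := fun z => exists c m, C c /\ z = c + b *~ m.
  apply: nCb; apply: (Cmax' B).
  - split; first split.
    + by exists 0, 0; rewrite mulr0z addr0.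
    + move=> x y [c [m [Cc ->]]] [c' [m' [Cc' ->]]].
      exists (c - c'), (m - m'); split; first exact: CB.
      by rewrite mulrzBr opprD addrACA.
    + by move=> x C0x; exists x, 0; rewrite mulr0z addr0; split=> //; apply: C0C.
    + move=> x Sx [c [m [Cc xE]]]; apply: contrapT => xnz; apply: hn.
      by exists c, m; rewrite -xE.
  - by move=> x Cx; exists x, 0; rewrite mulr0z addr0.
  - by exists 0, 1; rewrite add0r.
have notSC_C b : ~ inSC S C b -> ~ C b.
  by move=> h Cb; apply: h; exists 0; rewrite subr0.
have stepA b : ~ inSC S C b -> exists k, (0 < k)%N /\ inSC S C (b *+ k).
  move=> nb; have [c [m [Cc Sx xnz]]] := adjoin b (notSC_C b nb).
  case: m Sx xnz => k Sx xnz.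
  - exists k; split.
      case: k Sx xnz => // Sx xnz; exfalso; apply: xnz.
      by apply: SCd => //; rewrite mulr0z addr0.
    exists (c + b *~ k); split=> //.
    by rewrite pmulrn opprD addrA addrAC subrr; apply: CB.
  - exists k.+1; split=> //; exists (- (c + b *~ Negz k)); split.
      by rewrite -sub0r; apply: SB.
    by rewrite opprK NegzE mulrNz pmulrn addrC subrK.
have stepB : forall k, (0 < k)%N -> forall b, ~ inSC S C b -> inSC S C (b *+ k) ->
    exists p b', [/\ prime p, ~ inSC S C b' & inSC S C (b' *+ p)].
  elim/ltn_ind => k IH k0 b nb bk.
  have [k1|k1] := leqP k 1.
    have k1E : k = 1%N by apply/eqP; rewrite eqn_leq k1.
    by exfalso; apply: nb; move: bk; rewrite k1E mulr1n.
  pose p := pdiv k; have pp : prime p by apply: pdiv_prime.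
  have kE : k = (k %/ p * p)%N by rewrite divnK // pdiv_dvd.
  have k'0 : (0 < k %/ p)%N.
    by rewrite divn_gt0 ?prime_gt0 // pdiv_leq // ltnW.
  have k'lt : (k %/ p < k)%N by rewrite ltn_Pdiv // prime_gt1.
  have [h|h] := pselect (inSC S C (b *+ (k %/ p))).
    exact: (IH _ k'lt k'0 b nb h).
  by exists p, (b *+ (k %/ p)); split=> //; rewrite -mulrnA -kE.
have inSC_all : forall a, inSC S C a.
  move=> a; apply: contrapT => na.
  have [k [k0 ak]] := stepA a na.
  have [p [b [pp nb bp]]] := stepB k k0 a na ak.
  case: bp => s [Ss Cbs].
  have [s' [Ss' Cb1]] := H C (conj C0' CB) C0C SCd p b s pp Ss Cbs.
  pose b1 := b - s'.
  have nb1 : ~ inSC S C b1.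
    move=> [s1 [Ss1 Cs1]]; apply: nb; exists (s1 + s'); split.
      by have := SB _ _ Ss1 (SB _ _ S0 Ss'); rewrite sub0r opprK.
    by move: Cs1; rewrite /b1 opprD addrA addrAC.
  have [c [m [Cc Sx xnz]]] := adjoin b1 (notSC_C b1 nb1).
  case: (prime_split m pp) => [[m' mE]|[u [v uv]]].
    have gC : is_subgroup C by split.
    apply: xnz; apply: SCd => //; apply: (sgD gC) => //.
    by rewrite mE mulrC mulrzA -pmulrn; apply: (sgMz gC).
  have gC : is_subgroup C by split.
  apply: nb1; exists ((c + b1 *~ m) *~ u); split; first exact: sgMz.
  have e1 : b1 = (b1 *~ m) *~ u + (b1 *+ p) *~ v.
    by rewrite -[b1 in LHS]mulr1z -uv mulrzDr' [u * m]mulrC [v * _]mulrC !mulrzA pmulrn.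
  rewrite {1}e1 mulrzDl' [_ *~ u + (b1 *~ m) *~ u]addrC opprD addrACA subrr add0r.
  by apply: (sgB gC); apply: (sgMz gC) => //; apply: (sgMn gC).
have gC : is_subgroup C by split.
pose e := fun a => proj1_sig (cid (inSC_all a)).
have eS a : S (e a) /\ C (a - e a) := proj2_sig (cid (inSC_all a)).
have uniq a s : S s -> C (a - s) -> e a = s.
  move=> Ss Cs; have [Se Ce] := eS a; apply/eqP; rewrite -subr_eq0; apply/eqP.
  apply: SCd; first exact: SB.
  by have := sgB gC Cs Ce; rewrite opprB addrC addrA subrK.
exists e; split.
- move=> x y; apply: uniq; first by apply: SB; [case: (eS x)|case: (eS y)].
  by rewrite subrACA'; apply: (sgB gC); [case: (eS x)|case: (eS y)].
- by move=> x; case: (eS x).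
- by move=> x Sx; apply: uniq => //; rewrite subrr.
- by move=> x C0x; apply: uniq => //; rewrite subr0; apply: C0C.
Qed.
End S.

Set Implicit Arguments. Unset Strict Implicit. Unset Printing Implicit Defensive.
Import GRing.Theory.
Local Open Scope ring_scope.

Lemma bezout_nat (a b : nat) : coprime a b -> exists u v : int, u * a%:Z + v * b%:Z = 1.
Proof.
move=> cab; have : coprimez a%:Z b%:Z by [].
by move/coprimezP => [[u v] /= h]; exists u, v.
Qed.

Lemma prime_split_pow (p k : nat) (m : int) : prime p ->
  (exists m', m = m' * p%:Z) \/ (exists u v : int, u * m + v * (p ^ k)%N%:Z = 1).
Proof.
move=> pp; have [dv|ndv] := boolP (p %| `|m|)%N.
  left; exists (m %/ p%:Z)%Z; rewrite divzK //.
have : coprimez m (p ^ k)%N%:Z.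
  rewrite /coprimez /gcdz /=; change (coprime `|m| (p ^ k)).
  by apply: coprimeXr; rewrite coprime_sym prime_coprime.
by move/coprimezP => [[u v] /= h]; right; exists u, v.
Qed.

Section S3.
Variable A : zmodType.
Implicit Types (f g : A -> A) (x y z : A).

Lemma bez_apply x (u m v n : int) : u * m + v * n = 1 ->
  x = (x *~ m) *~ u + (x *~ n) *~ v.
Proof. by move=> h; rewrite -!mulrzA [m * u]mulrC [n * v]mulrC -mulrzDr' h mulr1z. Qed.

Lemma mulrzAC' x (m n : int) : x *~ m *~ n = x *~ n *~ m.
Proof. by rewrite -!mulrzA mulrC. Qed.

Lemma mulrnz x (n : nat) (m : int) : x *+ n *~ m = x *~ m *+ n.
Proof. by rewrite !pmulrn mulrzAC'. Qed.

Lemma exact_step (P : nat -> Prop) n : P 0%N -> ~ P n -> exists i, P i /\ ~ P i.+1.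
Proof.
move=> P0; elim: n => [//|n IH] nPn.
have [Pn|nPn'] := pselect (P n); first by exists n.
exact: IH.
Qed.

Definition primary (q : nat) x := exists i, x *+ (q ^ i) = 0.

Lemma primaryD q x y : primary q x -> primary q y -> primary q (x + y).
Proof.
move=> [i hi] [j hj]; exists (i + j)%N.
by rewrite mulrnDl expnD !mulrnA hi mul0rn add0r mulrnAC hj mul0rn.
Qed.

Lemma height_div (q : nat) :
  (forall x, x *+ q = 0 -> forall n, exists z, x = z *+ (q ^ n)) ->
  forall z, primary q z -> exists w, primary q w /\ w *+ q = z.
Proof.
move=> H z [k]; elim: k z => [|k IH] z hz.
  by exists 0; rewrite mul0rn; split; [exists 0%N; rewrite mul0rn|by rewrite expn0 mulr1n in hz].
have hx : (z *+ (q ^ k)) *+ q = 0 by rewrite -mulrnA -expnSr.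
have [w0 w0E] := H _ hx k.+1.
have [w1 [pw1 w1E]] : exists w, primary q w /\ w *+ q = z - w0 *+ q.
  by apply: IH; rewrite mulrnBl -mulrnA -expnS -w0E subrr.
exists (w0 + w1); split.
  by apply: primaryD => //; exists k.+2; rewrite expnSr mulrnA -w0E.
by rewrite mulrnDl w1E addrC subrK.
Qed.

Lemma primaryN q x : primary q x -> primary q (- x).
Proof. by move=> [i hi]; exists i; rewrite mulNrn hi oppr0. Qed.

Lemma chain_exists (P : A -> Prop) (k : nat -> nat) x0 :
  P x0 -> (forall N x, P x -> exists y, P y /\ y *+ k N = x) ->
  exists d : nat -> A, [/\ d 0%N = x0, forall N, P (d N) & forall N, d N.+1 *+ k N = d N].
Proof.
move=> P0 H.
pose st N (x : {x | P x}) : {x | P x} :=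
  let y := cid (H N (sval x) (svalP x)) in exist _ (sval y) (proj1 (svalP y)).
pose fix fc N := match N with 0%N => exist _ x0 P0 | N'.+1 => st N' (fc N') end.
exists (fun N => sval (fc N)); split; [by [] | move=> N; exact: svalP | move=> N].
rewrite /= /st /=; set y := cid _; by case: (svalP y).
Qed.

Definition chainU (d : nat -> A) x := exists N (m : int), x = d N *~ m.

Section Chain.
Variables (d : nat -> A) (k : nat -> nat).
Hypothesis dk : forall N, d N.+1 *+ k N = d N.
Hypothesis k0 : forall N, (0 < k N)%N.

Lemma chain_lift N K : (N <= K)%N -> exists c, (0 < c)%N /\ d N = d K *+ c.
Proof.
move/subnK => <-; elim: (K - N)%N => [|j [c [c0 IH]]]; first by exists 1%N.
exists (k (j + N) * c)%N; split; first by rewrite muln_gt0 k0.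
by rewrite IH mulrnA addSn dk.
Qed.

Lemma chainU_at x : chainU d x -> exists N, forall K, (N <= K)%N -> exists m, x = d K *~ m.
Proof.
move=> [N [m ->]]; exists N => K NK; have [c [_ ->]] := chain_lift NK.
by exists (c%:Z * m); rewrite mulrzA.
Qed.

Lemma chainU_sub : is_subgroup (chainU d).
Proof.
split; first by exists 0%N, 0.
move=> x y /chainU_at [Nx hx] /chainU_at [Ny hy].
have [mx ->] := hx (maxn Nx Ny) (leq_maxl _ _).
have [my ->] := hy (maxn Nx Ny) (leq_maxr _ _).
by exists (maxn Nx Ny), (mx - my); rewrite mulrzBr.
Qed.
End Chain.

Definition divP (S C0 : A -> Prop) :=
  forall C : A -> Prop, is_subgroup C -> (forall x, C0 x -> C x) ->
     (forall x, S x -> C x -> x = 0) ->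
     forall (p : nat) a s, prime p -> S s -> C (a *+ p - s) ->
     exists s', S s' /\ s' *+ p = s.

Lemma complement' (S C0 : A -> Prop) :
  is_subgroup S -> is_subgroup C0 -> (forall x, S x -> C0 x -> x = 0) -> divP S C0 ->
  exists e, [/\ is_endo e, forall x, S (e x), forall x, S x -> e x = x
              & forall x, C0 x -> e x = 0].
Proof.
move=> hS hC0 d0 dv; apply: complement => // C hC C0C SC p a s pp Ss Cs.
have [s' [Ss' s'E]] := dv C hC C0C SC p a s pp Ss Cs.
by exists s'; split=> //; rewrite mulrnBl s'E.
Qed.

Lemma central_proj (CE : End_centrally_essential A) (S C0 : A -> Prop) :
  is_subgroup S -> is_subgroup C0 -> (forall x, S x -> C0 x -> x = 0) -> divP S C0 ->
  exists e, [/\ endo_central e, forall x, S (e x), forall x, S x -> e x = x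
              & forall x, C0 x -> e x = 0].
Proof.
move=> hS hC0 d0 dv; have [e [he eS eid e0]] := complement' hS hC0 d0 dv.
exists e; split => //; apply: idem_central => // x; exact/eid/eS.
Qed.

Lemma central_comm e h : endo_central e -> is_endo h -> forall x, e (h x) = h (e x).
Proof. by move=> [_ he] hh x; have := he h hh x. Qed.

Lemma comm_mult f g u t (mt a b : int) : is_endo f -> is_endo g ->
  t = u *~ mt -> f u = u *~ a -> g u = u *~ b -> f (g t) = g (f t).
Proof.
move=> hf hg -> fu gu.
rewrite (endoMz hg u mt) gu (endoMz hf (u *~ b) mt) (endoMz hf u b) fu.
rewrite (endoMz hf u mt) fu (endoMz hg (u *~ a) mt) (endoMz hg u a) gu.
by rewrite (mulrzAC' u a b).
Qed.
End S3.

Set Implicit Arguments. Unset Strict Implicit. Unset Printing Implicit Defensive.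
Import GRing.Theory.
Local Open Scope ring_scope.

Section S4.
Variable A : zmodType.
Hypothesis CE : End_centrally_essential A.
Variables (f g : A -> A).
Hypotheses (hf : is_endo f) (hg : is_endo g).

Lemma sgp0 : is_subgroup (fun x : A => x = 0).
Proof. by split=> // x y -> ->; rewrite subrr. Qed.

Lemma prufer_case q (t : A) i : prime q -> t *+ (q ^ i) != 0 -> t *+ (q ^ i.+1) = 0 ->
  (forall z : A, primary q z -> exists w, primary q w /\ w *+ q = z) ->
  f (g t) = g (f t).
Proof.
move=> qp ti0 ti1 Hdiv.
have [d [d0 dP dk]] := chain_exists (k := fun _ => q) (ex_intro _ i.+1 ti1) (fun N x px => Hdiv x px).
have q0 : (0 < q)%N by apply: prime_gt0.
have dt N : d N *+ (q ^ N) = t.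
  elim: N => [|N IH]; first by rewrite expn0 mulr1n.
  by rewrite expnS mulrnA dk.
pose U := chainU d.
have hU : is_subgroup U by apply: (chainU_sub dk).
have dN0 N : d N *+ (q ^ (N + i.+1)) = 0 by rewrite expnD mulrnA dt.
have dvU : divP U (fun x => x = 0).
  move=> C _ _ _ p a s pp [N [m ->]] _.
  have [pq|pq] := eqVneq p q.
    by exists (d N.+1 *~ m); split; [exists N.+1, m | rewrite pq -mulrnz dk].
  have cp : coprime p (q ^ (N + i.+1)).
    by apply: coprimeXr; rewrite prime_coprime // dvdn_prime2.
  have [u [v uv]] := bezout_nat cp.
  exists (d N *~ m *~ u); split; first by exists N, (m * u); rewrite mulrzA.
  rewrite [RHS](bez_apply _ uv) -!pmulrn (mulrnz (d N *~ m) p u) -(mulrnz (d N) (q ^ (N + i.+1)) m) dN0.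
  by rewrite !mul0rz addr0.
have [e [ce eU eid _]] := central_proj CE hU sgp0 (fun x _ h => h) dvU.
have Ut : U t by exists 0%N, 1; rewrite d0.
have claim N : forall m, (d N *~ m) *+ (q ^ i.+1) = 0 -> exists al, d N *~ m = t *~ al.
  elim: N => [|N IH] m h; first by exists m; rewrite d0.
  have y0m : (t *+ (q ^ i)) *~ m = 0.
    have h2 : (d N.+1 *~ m) *+ (q ^ i.+1) *+ (q ^ N) = 0 by rewrite h mul0rn.
    rewrite -(dt N.+1) -mulrnA -h2 -mulrnA mulrnz; congr (_ *+ _).
    by rewrite -!expnD addSn addnC addSn.
  case: (prime_split_pow 1 m qp) => [[m' mE]|[u [v uv]]].
    have e1 : d N.+1 *~ m = d N *~ m' by rewrite mE mulrC mulrzA -pmulrn dk.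
    by rewrite e1; apply: IH; rewrite -e1.
  exfalso; move/eqP: ti0; apply.
  rewrite [LHS](bez_apply _ uv) y0m mul0rz add0r expn1 -pmulrn -mulrnA -expnSr ti1.
  by rewrite mul0rz.
have key h : is_endo h -> exists al, h t = t *~ al.
  move=> hh; have : U (h t) by rewrite -(eid t Ut) -(central_comm ce hh); apply: eU.
  move=> [N [m hE]]; rewrite hE; apply: claim; rewrite -hE -(endoMn hh) ti1; exact: endo0.
have [al fE] := key f hf; have [be gE] := key g hg.
exact: (comm_mult (mt := 1) hf hg (esym (mulr1z t)) fE gE).
Qed.

Lemma cyclic_case q x n (u : A) : prime q -> x *+ q = 0 -> x = u *+ (q ^ n) ->
  ~ (exists z, x = z *+ (q ^ n.+1)) ->
  forall t, primary q t -> f (g t) = g (f t).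
Proof.
move=> qp xq xu nh t pt.
have x0 : x != 0.
  by apply/eqP => x0; apply: nh; exists 0; rewrite mul0rn.
have uN : u *+ (q ^ n.+1) = 0 by rewrite expnSr mulrnA -xu.
pose S := fun z => exists m : int, z = u *~ m.
have hS : is_subgroup S.
  split; first by exists 0.
  by move=> _ _ [m ->] [m' ->]; exists (m - m'); rewrite mulrzBr.
pose C0 := fun z : A => exists w, z = w *+ (q ^ n.+1).
have hC0 : is_subgroup C0.
  split; first by exists 0; rewrite mul0rn.
  by move=> _ _ [w ->] [w' ->]; exists (w - w'); rewrite mulrnBl.
have notx w m : x *~ m = w *+ (q ^ n.+1) -> exists m', m = m' * q%:Z.
  move=> h; case: (prime_split_pow 1 m qp) => // [[u' [v uv]]].
  exfalso; apply: nh; exists (w *~ u').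
  by rewrite [LHS](bez_apply _ uv) h expn1 -pmulrn xq mul0rz addr0 mulrnz.
have disj_k : forall k, (k <= n.+1)%N -> forall m w, u *~ m = w *+ (q ^ n.+1) ->
    exists m', m = m' * (q ^ k)%N%:Z.
  elim=> [|k IH] kN m w h; first by exists m; rewrite expn0 mulr1.
  have [m' mE] := IH (ltnW kN) m w h.
  have kn : (k <= n)%N by [].
  have e2 : u *~ m' *+ (q ^ n) = w *+ (q ^ n.+1) *+ (q ^ (n - k)).
    by rewrite -h mE mulrzA -pmulrn -mulrnA -expnD subnKC.
  have : x *~ m' = (w *+ (q ^ (n - k))) *+ (q ^ n.+1).
    by rewrite xu mulrnz e2 mulrnAC.
  move/notx => [m'' m'E]; exists m''.
  by rewrite mE m'E -mulrA -PoszM -expnS.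
have disj z : S z -> C0 z -> z = 0.
  move=> [m ->] [w h]; have [m' mE] := disj_k n.+1 (leqnn _) m w h.
  by rewrite mE mulrC mulrzA -pmulrn uN mul0rz.
have dvS : divP S C0.
  move=> C hC C0C SC p a _ pp [m ->] Cs.
  have [pq|pq] := eqVneq p q.
    rewrite pq in Cs.
    have Cq : C ((a *+ q - u *~ m) *+ (q ^ n)) by apply: sgMn.
    have Ca : C (a *+ q *+ (q ^ n)) by apply: C0C; exists a; rewrite -mulrnA -expnS.
    have Cum : C ((u *~ m) *+ (q ^ n)).
      by have := sgB hC Ca Cq; rewrite mulrnBl opprB addrC subrK.
    have Sum : S ((u *~ m) *+ (q ^ n)) by exists (m * (q ^ n)%N%:Z); rewrite mulrzA -pmulrn.
    have := SC _ Sum Cum; rewrite -mulrnz -xu => h.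
    have [m' mE] : exists m', m = m' * q%:Z by apply: (notx 0); rewrite h mul0rn.
    by exists (u *~ m'); split; [exists m' | rewrite mE mulrzA -pmulrn pq].
  have cp : coprime p (q ^ n.+1).
    by apply: coprimeXr; rewrite prime_coprime // dvdn_prime2.
  have [u' [v uv]] := bezout_nat cp.
  exists (u *~ m *~ u'); split; first by exists (m * u'); rewrite mulrzA.
  rewrite [RHS](bez_apply _ uv) -!pmulrn (mulrnz (u *~ m) p u') -(mulrnz u (q ^ n.+1) m) uN.
  by rewrite !mul0rz addr0.
have [e [ce eS eid e0]] := central_proj CE hS hC0 disj dvS.
have he : is_endo e by case: ce.
have Su : S u by exists 1.
have tS : S t.
  apply: contrapT => ntS.
  pose t' := t - e t.
  have et' : e t' = 0 by rewrite /t' he (eid (e t) (eS t)) subrr.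
  have t'0 : t' != 0.
    by apply/eqP => h; apply: ntS; rewrite -[t]subr0 -h /t' opprB addrC subrK.
  have pt' : primary q t'.
    apply: primaryD => //; apply: primaryN.
    case: (eS t) => m ->; exists n.+1; by rewrite -mulrnz uN mul0rz.
  case: pt' => J hJ.
  have [i [hi hi1]] : exists i, t' *+ (q ^ i) != 0 /\ ~ (t' *+ (q ^ i.+1) != 0).
    apply: (exact_step (P := fun i => t' *+ (q ^ i) != 0) (n := J)).
      by rewrite expn0 mulr1n.
    by rewrite hJ eqxx.
  pose z := t' *+ (q ^ i).
  have zq : z *+ q = 0.
    by move/negP: hi1; rewrite negbK => /eqP; rewrite expnSr mulrnA.
  have ez : e z = 0 by rewrite /z (endoMn he) et' mul0rn.
  have wd m1 m2 : u *~ m1 = u *~ m2 -> z *~ m1 = z *~ m2.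
    move=> h; apply/eqP; rewrite -subr_eq0 -mulrzBr; apply/eqP.
    have hu : u *~ (m1 - m2) = 0 by rewrite mulrzBr h subrr.
    case: (prime_split_pow n.+1 (m1 - m2) qp) => [[m' mE]|[u' [v uv]]].
      by rewrite mE mulrC mulrzA -pmulrn zq mul0rz.
    exfalso; move/eqP: x0; apply; rewrite xu.
    by rewrite (bez_apply u uv) hu mul0rz add0r -pmulrn uN mul0rz mul0rn.
  pose cf a := sval (cid (eS a)).
  have cfE a : e a = u *~ cf a by rewrite /cf; case: (cid (eS a)).
  pose psi a := z *~ cf a.
  have hpsi : is_endo psi.
    move=> a b; rewrite /psi -mulrzBr; apply: wd.
    by rewrite -cfE he !cfE mulrzBr.
  have := central_comm ce hpsi u.
  rewrite /psi (endoMz he) ez mul0rz (eid u Su).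
  have -> : z *~ cf u = z *~ 1 by apply: wd; rewrite -cfE eid.
  by move/eqP; rewrite mulr1z eq_sym; apply/negP.
have key h : is_endo h -> exists al, h u = u *~ al.
  move=> hh; have : S (h u) by rewrite -(eid u Su) -(central_comm ce hh); apply: eS.
  by move=> [m hE]; exists m.
have [al fE] := key f hf; have [be gE] := key g hg.
case: tS => mt tE.
exact: (comm_mult hf hg tE fE gE).
Qed.

Lemma primary_comm q t : prime q -> primary q t -> f (g t) = g (f t).
Proof.
move=> qp pt.
have [Hdiv|nHdiv] := pselect (forall z : A, primary q z -> exists w, primary q w /\ w *+ q = z).
  have [->|t0] := eqVneq t 0; first by rewrite !(endo0 hf, endo0 hg).
  case: pt => J hJ.
  have [i [hi hi1]] : exists i, t *+ (q ^ i) != 0 /\ ~ (t *+ (q ^ i.+1) != 0).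
    apply: (exact_step (P := fun i => t *+ (q ^ i) != 0) (n := J)).
      by rewrite expn0 mulr1n.
    by rewrite hJ eqxx.
  apply: (prufer_case qp hi _ Hdiv).
  by move/negP: hi1; rewrite negbK => /eqP.
have [x [xq [n nn]]] : exists x : A, x *+ q = 0 /\ exists n, ~ exists z, x = z *+ (q ^ n).
  apply: contrapT => H; apply: nHdiv; apply: height_div => x xq n.
  apply: contrapT => hn; apply: H; exists x; split=> //; exists n; exact: hn.
have [k [[u xu] nk]] : exists k, (exists z, x = z *+ (q ^ k)) /\ ~ (exists z, x = z *+ (q ^ k.+1)).
  apply: (exact_step (P := fun k => exists z, x = z *+ (q ^ k)) (n := n)).
    by exists x; rewrite expn0 mulr1n.
  exact: nn.
exact: (cyclic_case qp xq xu nk pt).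
Qed.

Definition torsion (x : A) := exists n, (0 < n)%N /\ x *+ n = 0.

Lemma torsion_comm t : torsion t -> f (g t) = g (f t).
Proof.
move=> [n [n0 tn]]; elim/ltn_ind: n n0 t tn => n IH n0 t tn.
have [n1|n1] := leqP n 1.
  have -> : t = 0.
    have n1E : n = 1%N by apply/eqP; rewrite eqn_leq n1.
    by move: tn; rewrite n1E mulr1n.
  by rewrite !(endo0 hf, endo0 hg).
have pp : prime (pdiv n) by apply: pdiv_prime.
set p := pdiv n in pp *.
have [m' cop nE] := pfactor_coprime pp n0.
set a := logn p n in nE.
have [m1|m1] := eqVneq m' 1%N.
  by apply: (primary_comm pp); exists a; rewrite -tn nE m1 mul1n.
have m'0 : (0 < m')%N by move: n0; rewrite nE muln_gt0 => /andP[].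
have pa1 : (1 < p ^ a)%N.
  case: a nE => [|a'] nE; last by rewrite -[1%N](expn0 p) ltn_exp2l ?prime_gt1 // ltnS.
  exfalso; move: cop; rewrite prime_coprime // -(muln1 m') -(expn0 p) -nE.
  by rewrite pdiv_dvd.
have ltm' : (m' < n)%N by rewrite nE -[X in (X < _)%N]muln1 ltn_pmul2l.
have ltpa : (p ^ a < n)%N.
  by rewrite nE -[X in (X < _)%N]mul1n ltn_pmul2r ?expn_gt0 ?prime_gt0 // ltn_neqAle eq_sym m1.
have [u [v uv]] := bezout_nat (coprimeXl a cop).
rewrite (bez_apply t uv).
pose t1 := t *~ (p ^ a)%N%:Z *~ u; pose t2 := t *~ m'%:Z *~ v.
have ht1 : t1 *+ m' = 0.
  by rewrite /t1 -mulrnz -!pmulrn -mulrnA mulnC -nE tn mul0rz.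
have ht2 : t2 *+ (p ^ a) = 0.
  by rewrite /t2 -mulrnz -!pmulrn -mulrnA -nE tn mul0rz.
have c1 := IH m' ltm' m'0 t1 ht1.
have c2 := IH _ ltpa (ltnW pa1) t2 ht2.
by rewrite -/t1 -/t2 !(endoD hf, endoD hg) c1 c2.
Qed.
End S4.

Set Implicit Arguments. Unset Strict Implicit. Unset Printing Implicit Defensive.
Import GRing.Theory.
Local Open Scope ring_scope.

Section S5.
Variable A : zmodType.

Lemma nontors (x : A) m : ~ torsion x -> x *~ m = 0 -> m = 0.
Proof.
move=> nt; case: m => [[|n]|n] // h; exfalso; apply: nt.
  by exists n.+1; split=> //; rewrite pmulrn.
by exists n.+1; split=> //; move: h; rewrite NegzE mulrNz -pmulrn => /eqP; rewrite oppr_eq0 => /eqP.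
Qed.

Hypothesis CE : End_centrally_essential A.

Lemma CE_comm : non_reduced A -> End_commutative A.
Proof.
move=> [D [[hD Ddiv] [d [Dd d0]]]] f g hf hg a; rewrite /endo_mul.
have [dc [dc0 dcD dck]] := chain_exists (k := fun N => N.+1`!) Dd
   (fun N x Dx => Ddiv x N.+1`! Dx (fact_gt0 _)).
have k0 : forall N, (0 < N.+1`!)%N by move=> N; apply: fact_gt0.
pose U := chainU dc.
have hU : is_subgroup U by apply: (chainU_sub dck).
have Udiv C0 : divP U C0.
  move=> C _ _ _ p _ _ pp [N [m ->]] _.
  have [c [c0 cE]] := chain_lift dck k0 (leq_addr p N).
  set K := (N + p)%N in cE.
  have pK : (p %| K.+1`!)%N by apply: dvdn_fact; rewrite prime_gt0 //=; apply: leqW; apply: leq_addl.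
  exists (dc K.+1 *+ (K.+1`! %/ p * c) *~ m); split.
    by exists K.+1, ((K.+1`! %/ p * c)%N%:Z * m); rewrite mulrzA pmulrn.
  rewrite -mulrnz -mulrnA mulnAC divnK // mulrnA dck -cE //.
have dU : U d by exists 0%N, 1; rewrite dc0.
have [e [ce eU eid _]] := central_proj CE hU (sgp0 A) (fun x _ h => h) (Udiv _).
have he : is_endo e by case: ce.
have kertor k : e k = 0 -> torsion k.
  move=> ek; apply: contrapT => nt.
  pose C0 := fun z => exists m : int, z = (k - d) *~ m.
  have hC0 : is_subgroup C0.
    split; first by exists 0.
    by move=> _ _ [m ->] [m' ->]; exists (m - m'); rewrite mulrzBr.
  have disj z : U z -> C0 z -> z = 0.
    move=> Uz [m zE].
    have Ukm : U (k *~ m).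
      have -> : k *~ m = z + d *~ m by rewrite zE mulrzBl subrK.
      by apply: (sgD hU) => //; apply: (sgMz hU).
    have : k *~ m = 0 by rewrite -(eid _ Ukm) (endoMz he) ek mul0rz.
    by move/(nontors nt) => m0; rewrite zE m0.
  have [e2 [ce2 eU2 eid2 e02]] := central_proj CE hU hC0 disj (Udiv _).
  have he2 : is_endo e2 by case: ce2.
  have e2k : e2 k = d.
    have := e02 (k - d) (ex_intro _ 1 (mulr1z _)); rewrite he2 (eid2 d dU).
    by move/eqP; rewrite subr_eq0 => /eqP.
  have := central_comm ce2 he k; rewrite ek (endo0 he2) e2k (eid d dU).
  by move=> h; apply: d0; rewrite h.
have tor_a : torsion (a - e a).
  by apply: kertor; rewrite he (eid _ (eU a)) subrr.
have h1 := torsion_comm CE hf hg tor_a.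
suff h2 : f (g (e a)) = g (f (e a)).
  have : f (g ((a - e a) + e a)) = g (f ((a - e a) + e a)).
    rewrite (endoD hg (a - e a) (e a)) (endoD hf (g (a - e a)) (g (e a))).
    by rewrite (endoD hf (a - e a) (e a)) (endoD hg (f (a - e a)) (f (e a))) h1 h2.
  by rewrite subrK.
have Uea := eU a.
have pres h : is_endo h -> forall u, U u -> U (h u).
  by move=> hh u Uu; rewrite -(eid u Uu) -(central_comm ce hh); apply: eU.
have [dt|ndt] := pselect (torsion d).
  apply: (torsion_comm CE hf hg).
  have tdc : forall N, torsion (dc N).
    elim=> [|N [n [n0 hn]]]; first by rewrite dc0.
    exists (N.+1`! * n)%N; split; first by rewrite muln_gt0 fact_gt0.
    by rewrite mulrnA dck.
  case: Uea => N [m ->]; have [n [n0 hn]] := tdc N.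
  by exists n; split=> //; rewrite -mulrnz hn mul0rz.
set u := e a in Uea *.
have [N0 h0] := chainU_at dck k0 Uea.
have [N1 h1'] := chainU_at dck k0 (pres f hf u Uea).
have [N2 h2'] := chainU_at dck k0 (pres g hg u Uea).
set K := maxn N0 (maxn N1 N2).
have [m0 u0E] := h0 K (leq_maxl _ _).
have [m1 fuE] := h1' K (leq_trans (leq_maxl _ _) (leq_maxr _ _)).
have [m2 guE] := h2' K (leq_trans (leq_maxr _ _) (leq_maxr _ _)).
have [m0z|m0nz] := eqVneq m0 0.
  have u0 : u = 0 by rewrite u0E m0z mulr0z.
  by rewrite u0 !(endo0 hf, endo0 hg).
have Ugu := pres g hg u Uea; have Ufu := pres f hf u Uea.
have Uw : U (f (g u) - g (f u)) := sgB hU (pres f hf _ Ugu) (pres g hg _ Ufu).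
have wm : (f (g u) - g (f u)) *~ m0 = 0.
  have gm : (g u) *~ m0 = u *~ m2 by rewrite guE u0E mulrzAC'.
  have fm : (f u) *~ m0 = u *~ m1 by rewrite fuE u0E mulrzAC'.
  rewrite mulrzBl -(endoMz hf (g u) m0) -(endoMz hg (f u) m0) gm fm.
  by rewrite (endoMz hf u m2) (endoMz hg u m1) fuE guE mulrzAC' subrr.
case: Uw => K' [mw wE].
have [c [c0 cE]] := chain_lift dck k0 (leq0n K').
have : d *~ (mw * m0) = 0.
  by rewrite -dc0 cE mulrzA !mulrnz -wE wm mul0rn.
move/(nontors ndt)/eqP; rewrite mulf_eq0 (negbTE m0nz) orbF => /eqP mw0.
by apply/eqP; rewrite -subr_eq0 wE mw0 mulr0z.
Qed.
End S5.

Theorem corollary2p5 (A : zmodType) :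
  non_reduced A -> (End_centrally_essential A <-> End_commutative A).
Proof.
move=> NR; split; first by move=> CE; apply: CE_comm.
move=> comm a ha [z az]; exists (fun x => x), a; split.
- by split; [exact: endo_id | move=> g hg x].
- by exists (a z).
- by split=> // g hg x; apply: comm.
- by exists z.
- by [].
Qed.
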